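(* Let $V$ be a finite-dimensional space of $k$-forms on $T^n$ and let $\{E_{F,F'}:F\subseteq F'\subseteq T^n\}$ be a consistent family of extension operators. For $0\le d\le n$ let $$W_d:=\bigoplus_{F\subseteq T^n,\ \dim F=d}E_{F,T^n}\mathring V(F).$$ Then $V_d=W_d\oplus V_{d+1}$ for each $d$, where $V_d$ is the subspace of forms in $V$ whose traces vanish on all $(d-1)$-dimensional faces of $T^n$.
   Context: $T^n\subset\mathbb R^{n+1}$ is the standard simplex $\{\lambda_i\ge0,\ \sum\lambda_i=1\}$. For a face $F$, $V(F)=\mathrm{tr}_{T^n,F}(V)$, where $\mathrm{tr}_{F',F}$ denotes pullback of forms from a face $F'$ to a subface $F$; $\mathring V(F)$ is the subspace of $V(F)$ of forms with vanishing trace on $\partial F$. $V_0=V$, $V_{n+1}=0$. For faces $K\subseteq F$, a linear map $E_{K,F}:V(K)\to V(F)$ is an extension operator if $\mathrm{tr}_{F,K}E_{K,F}\alpha=\alpha$ for all $\alpha\in V(K)$. A family of extension operators $\{E_{F,F'}\}$ is consistent if for any subfaces $F,F'$ of a face $H$, with $K=F\cap F'$, one has $\mathrm{tr}_{H,F'}\circ E_{F,H}=E_{K,F'}\circ\mathrm{tr}_{F,K}$ on $V(F)$. (Part of the claim is that the sum defining $W_d$ is direct.) *)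

(* Defs.v *)
From HB Require Import structures.
From mathcomp Require Import all_boot all_order all_algebra.
From mathcomp Require Import reals.
Set Implicit Arguments. Unset Strict Implicit. Unset Printing Implicit Defensive.
Import Order.TTheory GRing.Theory Num.Theory.
Local Open Scope ring_scope.

Section SimplexForms.
Variables (R : realType) (n k : nat).

(* A (not necessarily smooth) k-form on R^{n+1}: at a point x, a function of
   k vectors.  Forms on a sface are represented by their canonical
   representative, which vanishes off the sface / off its tangent space. *)
Definition kform := 'rV[R]_(n.+1) -> ('I_k -> 'rV[R]_(n.+1)) -> R.

(* A sface of T^n is given by its vertex set sigma (a subset of {0..n});
   dim = #|sigma| - 1.  The empty set is the empty sface. *)
Definition sface := {set 'I_(n.+1)}.

Definition in_face (s : sface) (x : 'rV[R]_(n.+1)) : bool :=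
  [forall i, 0 <= x ord0 i] && (\sum_i x ord0 i == 1)
  && [forall i, (i \notin s) ==> (x ord0 i == 0)].

Definition tangent (s : sface) (v : 'rV[R]_(n.+1)) : bool :=
  (\sum_i v ord0 i == 0) && [forall i, (i \notin s) ==> (v ord0 i == 0)].

(* trace (pullback) onto the sface sigma: evaluate only at points of sigma
   on tangent vectors of sigma.  tr_{F',F} = trace F for every F' containing F. *)
Definition trace (s : sface) (w : kform) : kform := fun x vs =>
  if in_face s x && [forall j, tangent s (vs j)] then w x vs else 0.

Definition upd (vs : 'I_k -> 'rV[R]_(n.+1)) (j : 'I_k) (u : 'rV[R]_(n.+1)) :=
  fun l => if l == j then u else vs l.

Definition is_form_on (s : sface) (w : kform) : Prop :=
  [/\ trace s w = w,
      (forall x, in_face s x -> forall vs, (forall j, tangent s (vs j)) ->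
         forall j u v (a : R), tangent s u -> tangent s v ->
         w x (upd vs j (a *: u + v)) = a * w x (upd vs j u) + w x (upd vs j v)) &
      (forall x, in_face s x -> forall vs, (forall j, tangent s (vs j)) ->
         forall i j, i != j -> vs i = vs j -> w x vs = 0)].

Definition form0 : kform := fun _ _ => 0.
Definition form_add (w1 w2 : kform) : kform := fun x vs => w1 x vs + w2 x vs.
Definition form_scale (a : R) (w : kform) : kform := fun x vs => a * w x vs.
Definition form_sum (P : pred sface) (f : sface -> kform) : kform :=
  fun x vs => \sum_(s | P s) f s x vs.

(* V = the (finite-dimensional) span of the forms b_0,...,b_{m-1} *)
Definition span (m : nat) (b : 'I_m -> kform) (w : kform) : Prop :=
  exists c : 'I_m -> R, w = fun x vs => \sum_i c i * b i x vs.

Definition VF (m : nat) (b : 'I_m -> kform) (s : sface) (w : kform) : Prop :=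
  exists w0, span b w0 /\ w = trace s w0.

Definition Vring (m : nat) (b : 'I_m -> kform) (s : sface) (w : kform) : Prop :=
  VF b s w /\ forall t : sface, t \proper s -> trace t w = form0.

(* V_d: forms in V whose traces vanish on all (d-1)-dimensional faces
   (faces with d vertices) *)
Definition Vd (m : nat) (b : 'I_m -> kform) (d : nat) (w : kform) : Prop :=
  span b w /\ forall t : sface, #|t| = d -> trace t w = form0.

Definition ext_family (m : nat) (b : 'I_m -> kform) (E : sface -> sface -> kform -> kform) : Prop :=
  forall K F : sface, K \subset F ->
  [/\ (forall a, VF b K a -> VF b F (E K F a)),
      (forall a1 a2 (c : R), VF b K a1 -> VF b K a2 ->
         E K F (form_add (form_scale c a1) a2) = form_add (form_scale c (E K F a1)) (E K F a2)) &
      (forall a, VF b K a -> trace K (E K F a) = a)].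

(* consistency: tr_{H,F'} o E_{F,H} = E_{K,F'} o tr_{F,K} on V(F), K = F \cap F' *)
Definition consistent (m : nat) (b : 'I_m -> kform) (E : sface -> sface -> kform -> kform) : Prop :=
  forall F F' H : sface, F \subset H -> F' \subset H ->
  forall a, VF b F a -> trace F' (E F H a) = E (F :&: F') F' (trace (F :&: F') a).

(* W_d = sum over d-dimensional faces F of E_{F,T^n} \mathring V(F) *)
Definition Wd (m : nat) (b : 'I_m -> kform) (E : sface -> sface -> kform -> kform) (d : nat)
    (w : kform) : Prop :=
  exists al : sface -> kform, (forall s : sface, #|s| = d.+1 -> Vring b s (al s)) /\
    w = form_sum (fun s => #|s| == d.+1) (fun s => E s setT (al s)).

End SimplexForms.

(* Main.v *)
Require Import Defs.
From HB Require Import structures.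
From mathcomp Require Import all_boot all_order all_algebra.
From mathcomp Require Import reals.
From Stdlib Require Import FunctionalExtensionality.
From mathcomp Require Import zify.
Import Order.TTheory GRing.Theory Num.Theory.
Local Open Scope ring_scope.
Set Implicit Arguments. Unset Strict Implicit.

Lemma fext2 (R : realType) (n k : nat) (f g : kform R n k) :
  (forall x vs, f x vs = g x vs) -> f = g.
Proof. by move=> H; apply: functional_extensionality => x; apply: functional_extensionality. Qed.

Lemma in_face_sub (R : realType) (n : nat) (t t' : sface n) x :
  t \subset t' -> in_face t x -> @in_face R n t' x.
Proof.
move=> st /andP[/andP[h1 h2] /forallP h3]; rewrite /in_face h1 h2 /=.
apply/forallP => i; apply/implyP => hi; apply: (implyP (h3 i)).
by apply/negP => /(subsetP st); rewrite (negbTE hi).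
Qed.

Lemma tangent_sub (R : realType) (n : nat) (t t' : sface n) v :
  t \subset t' -> tangent t v -> @tangent R n t' v.
Proof.
move=> st /andP[h2 /forallP h3]; rewrite /tangent h2 /=.
apply/forallP => i; apply/implyP => hi; apply: (implyP (h3 i)).
by apply/negP => /(subsetP st); rewrite (negbTE hi).
Qed.

Lemma trace_trace (R : realType) (n k : nat) (t t' : sface n) (w : kform R n k) :
  t \subset t' -> trace t (trace t' w) = trace t w.
Proof.
move=> st; apply: fext2 => x vs; rewrite /trace.
case: ifP => // /andP[hx /forallP hv].
rewrite (in_face_sub st hx) /=.
have -> // : [forall j, tangent t' (vs j)].
by apply/forallP => j; exact: tangent_sub st (hv j).
Qed.

Lemma trace_form0 (R : realType) (n k : nat) (t : sface n) :
  trace t (@form0 R n k) = (@form0 _ _ _).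
Proof. by apply: fext2 => x vs; rewrite /trace /form0; case: ifP. Qed.

Lemma trace_sum (R : realType) (n k : nat) (t : sface n) (P : pred (sface n)) (f : sface n -> kform R n k) :
  trace t (form_sum P f) = form_sum P (fun s => trace t (f s)).
Proof.
apply: fext2 => x vs; rewrite /trace /form_sum; case: ifP => // _.
by rewrite big1.
Qed.

Lemma form_sum0 (R : realType) (n k : nat) (P : pred (sface n)) (f : sface n -> kform R n k) :
  (forall s, P s -> f s = (@form0 _ _ _)) -> form_sum P f = (@form0 _ _ _).
Proof. by move=> H; apply: fext2 => x vs; rewrite /form_sum big1 // => s /H ->. Qed.

Lemma span0 (R : realType) (n k m : nat) (b : 'I_m -> kform R n k) : Defs.span b (@form0 _ _ _).
Proof. by exists (fun _ => 0); apply: fext2 => x vs; rewrite big1 // => i _; rewrite mul0r. Qed.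

Lemma VF0 (R : realType) (n k m : nat) (b : 'I_m -> kform R n k) s : VF b s (@form0 _ _ _).
Proof. by exists (@form0 _ _ _); split; [apply: span0 | rewrite trace_form0]. Qed.

Lemma E0 (R : realType) (n k m : nat) (b : 'I_m -> kform R n k) E (K F : sface n) :
  ext_family b E -> K \subset F -> E K F (@form0 _ _ _) = (@form0 _ _ _).
Proof.
move=> hE KF; case: (hE K F KF) => _ hl _.
have := hl (@form0 _ _ _) (@form0 _ _ _) 1 (VF0 b K) (VF0 b K).
have -> : form_add (form_scale 1 (@form0 _ _ _)) (@form0 _ _ _) = @form0 R n k.
  by apply: fext2 => x vs; rewrite /form_add /form_scale /form0 mulr0 addr0.
set e := E K F (@form0 _ _ _) => he.
apply: fext2 => x vs.
have := congr1 (fun f => f x vs) he; rewrite /form_add /form_scale mul1r /form0.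
move=> h; have : e x vs + e x vs - e x vs = e x vs - e x vs by rewrite -h.
by rewrite addrK subrr.
Qed.

Lemma traceT_span (R : realType) (n k m : nat) (b : 'I_m -> kform R n k) w :
  (forall i, is_form_on setT (b i)) -> Defs.span b w -> trace setT w = w.
Proof.
move=> hb [c ->]; apply: fext2 => x vs; rewrite /trace; case: ifP => // hc.
symmetry; rewrite big1 // => i _.
case: (hb i) => h _ _.
by rewrite -h /trace hc mulr0.
Qed.

Lemma VFT (R : realType) (n k m : nat) (b : 'I_m -> kform R n k) w :
  (forall i, is_form_on setT (b i)) -> VF b setT w -> Defs.span b w.
Proof. by move=> hb [w0 [hs ->]]; rewrite (traceT_span hb hs). Qed.

Lemma span_sum (R : realType) (n k m : nat) (b : 'I_m -> kform R n k) (P : pred (sface n)) (f : sface n -> kform R n k) :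
  (forall s, P s -> Defs.span b (f s)) -> Defs.span b (form_sum P f).
Proof.
move=> H.
have : forall s, exists c : 'I_m -> R, P s -> f s = fun x vs => \sum_i c i * b i x vs.
  move=> s; case: (boolP (P s)) => hs; last by exists (fun _ => 0).
  by case: (H s hs) => c hc; exists c.
case/fin_all_exists => C hC.
exists (fun i => \sum_(s | P s) C s i); apply: fext2 => x vs.
rewrite /form_sum (eq_bigr (fun s => \sum_i C s i * b i x vs)); last first.
  by move=> s hs; rewrite (hC s hs).
rewrite exchange_big /=; apply: eq_bigr => i _; by rewrite mulr_suml.
Qed.

Lemma span_sub (R : realType) (n k m : nat) (b : 'I_m -> kform R n k) w1 w2 :
  Defs.span b w1 -> Defs.span b w2 -> Defs.span b (fun x vs => w1 x vs - w2 x vs).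
Proof.
move=> [c1 ->] [c2 ->]; exists (fun i => c1 i - c2 i); apply: fext2 => x vs.
by rewrite -sumrB; apply: eq_bigr => i _; rewrite mulrBl.
Qed.

Lemma ext_set (T : finType) (A : {set T}) j :
  (#|A| <= j <= #|T|)%N -> exists B : {set T}, A \subset B /\ #|B| = j.
Proof.
elim: j => [|j IH].
  rewrite leqn0 => /andP[/eqP h _]; by exists A.
move=> /andP[hA hj].
case: (eqVneq #|A| j.+1) => [<-|hne]; first by exists A.
have hA' : (#|A| <= j)%N by rewrite -ltnS ltn_neqAle hne hA.
case: (IH _) => [|B [AB cB]]; first by rewrite hA' ltnW.
have /card_gt0P [x hx] : (0 < #|~: B|)%N.
  by move: (cardsC B) hj; rewrite cB => <-; lia.
rewrite in_setC in hx.
exists (x |: B); split; first by apply: subset_trans AB (subsetUr _ _).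
by rewrite cardsU1 hx cB.
Qed.

Lemma Vd_low (R : realType) (n k m : nat) (b : 'I_m -> kform R n k) d w (t : sface n) :
  Vd b d w -> (d <= n.+1)%N -> (#|t| <= d)%N -> trace t w = (@form0 _ _ _).
Proof.
move=> [_ hw] hd ht.
case: (@ext_set _ t d); first by rewrite ht card_ord.
move=> B [tB cB]; by rewrite -(trace_trace w tB) (hw B cB) trace_form0.
Qed.

Lemma trE0 (R : realType) (n k m : nat) (b : 'I_m -> kform R n k) E (s t : sface n) a :
  ext_family b E -> consistent b E -> Vring b s a -> ~~ (s \subset t) ->
  trace t (E s setT a) = (@form0 _ _ _).
Proof.
move=> hE hC [hv hr] st.
rewrite (hC s t setT (subsetT _) (subsetT _) a hv).
rewrite hr; first by apply: E0 hE _; exact: subsetIr.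
by rewrite properE subsetIl /= subsetI subxx.
Qed.

Lemma key (R : realType) (n k m : nat) (b : 'I_m -> kform R n k) E d al (t : sface n) :
  ext_family b E -> consistent b E ->
  (forall s : sface n, #|s| = d.+1 -> Vring b s (al s)) -> #|t| = d.+1 ->
  trace t (form_sum (fun s => #|s| == d.+1) (fun s => E s setT (al s))) = al t.
Proof.
move=> hE hC hal ht; rewrite trace_sum; apply: fext2 => x vs.
rewrite /form_sum (bigD1 t) /=; last by rewrite ht.
rewrite big1 ?addr0.
  case: (hE t setT (subsetT _)) => _ _ h3.
  by rewrite h3 //; case: (hal t ht).
move=> s /andP[/eqP hs hst].
rewrite (trE0 hE hC (hal s hs)) //.
apply/negP => st; move: hst.
by rewrite eqEcard st hs ht leqnn.
Qed.

Unset Implicit Arguments. Set Strict Implicit.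

Theorem propositionA2 (R : realType) (n k m : nat) (b : 'I_m -> kform R n k)
    (E : sface n -> sface n -> kform R n k -> kform R n k) :
  (forall i, is_form_on setT (b i)) ->
  ext_family b E -> consistent b E ->
  forall d : nat, (d <= n)%N ->
  [/\ (* W_d and V_{d+1} are subspaces of V_d *)
      (forall w, Wd b E d w -> Vd b d w),
      (forall w, Vd b d.+1 w -> Vd b d w),
      (* V_d = W_d + V_{d+1} *)
      (forall w, Vd b d w -> exists w1 w2,
          [/\ Wd b E d w1, Vd b d.+1 w2 & w = form_add w1 w2]),
      (* W_d \cap V_{d+1} = 0 *)
      (forall w, Wd b E d w -> Vd b d.+1 w -> w = @form0 R n k) &
      (* the sum defining W_d is direct *)
      (forall al : sface n -> kform R n k,
          (forall s : sface n, #|s| = d.+1 -> Vring b s (al s)) ->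
          form_sum (fun s => #|s| == d.+1) (fun s => E s setT (al s)) = @form0 R n k ->
          forall s : sface n, #|s| = d.+1 -> E s setT (al s) = @form0 R n k)].
Proof.
move=> hb hE hC d hd.
have WdV : forall w, Wd b E d w -> Defs.span b w.
  move=> w [al [hal ->]]; apply: span_sum => s /eqP hs.
  apply: (VFT hb); case: (hE s setT (subsetT _)) => h1 _ _.
  by apply: h1; case: (hal s hs).
split.
- move=> w hw; split; first exact: WdV.
  move=> t ht; case: hw => al [hal ->]; rewrite trace_sum.
  apply: form_sum0 => s /eqP hs; apply: (trE0 hE hC (hal s hs)).
  by apply/negP => /subset_leq_card; rewrite hs ht ltnn.
- move=> w [hs hw]; split => // t ht.
  apply: (Vd_low (d := d.+1) (conj hs hw)); first by rewrite ltnS.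
  by rewrite ht.
- move=> w hw.
  set al := fun s : sface n => trace s w.
  have hal : forall s : sface n, #|s| = d.+1 -> Vring b s (al s).
    move=> s hs; split; first by exists w; split => //; case: hw.
    move=> t tps; have ts := proper_sub tps.
    rewrite /al trace_trace //; apply: (Vd_low hw); first exact: leqW.
    by rewrite -ltnS -hs; exact: proper_card tps.
  set w1 := form_sum (fun s => #|s| == d.+1) (fun s => E s setT (al s)).
  have hw1 : Wd b E d w1 by exists al.
  exists w1, (fun x vs => w x vs - w1 x vs); split => //.
  + split; first by apply: span_sub; [case: hw | exact: WdV].
    move=> t ht; apply: fext2 => x vs.
    have K : trace t w1 = trace t w := key hE hC hal ht.
    have := congr1 (fun f => f x vs) K.
    rewrite /trace /form0 /=; case: ifP => // _ ->.
    by rewrite subrr.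
  + by apply: fext2 => x vs; rewrite /form_add addrC subrK.
- move=> w [al [hal ->]] [_ hw].
  apply: form_sum0 => s /eqP hs.
  have := key hE hC hal hs; rewrite (hw s hs) => <-.
  by apply: E0 hE _; exact: subsetT.
- move=> al hal h0 s hs.
  have := key hE hC hal hs; rewrite h0 trace_form0 => <-.
  by apply: E0 hE _; exact: subsetT.
Qed.
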